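(* Let $\Sigma=(X,U,F)$ be a system and $Q\subset X$ a controlled invariant set. If $K\subset Q$ (nonempty) and $m\in\mathbb{N}$, then \[h_{inv}(K,Q)=\limsup_{n\to\infty}\frac{1}{nm}\log r_{inv}(nm,K,Q).\]
   Context: A system is a triple $\Sigma=(X,U,F)$ where $X,U$ are nonempty sets and $F:X\times U\rightrightarrows X$ is a set-valued map with $F(x,u)\neq\emptyset$ for all $(x,u)$. For $A\subset X$ and $u\in U$, $F(A,u)=\bigcup_{x\in A}F(x,u)$. A set $Q\subset X$ is controlled invariant if for every $x\in Q$ there is $u\in U$ with $F(x,u)\subset Q$. For $u\in U$ put $Q_u=\{x\in Q: F(x,u)\subset Q\}$. Elements of $U^n$ are written $\omega=\omega_0\omega_1\cdots\omega_{n-1}$, and $\omega_{[0,i]}=\omega_0\cdots\omega_i$. A set $S\subset U^n$ is an admissible family of length $n$ for $Q$ if (a) $\omega'_0=\omega''_0$ for all $\omega',\omega''\in S$, and (b) there exists $x\in Q$ such that for every $\omega\in S$, with $I^0_\omega(x)=\{x\}$: for all $i=0,1,\dots,n-2$, $F(I^i_\omega(x),\omega_i)\subset\bigcup_{\omega'\in S,\ \omega'_{[0,i]}=\omega_{[0,i]}}Q_{\omega'_{i+1}}$ and $I^{i+1}_\omega(x):=F(I^i_\omega(x),\omega_i)\cap Q_{\omega_{i+1}}\neq\emptyset$; and $I^n_\omega(x):=F(I^{n-1}_\omega(x),\omega_{n-1})\subset Q$. Let $AF^n(Q)$ be the set of admissible families of length $n$ for $Q$, and for $S\in AF^n(Q)$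 let $Q_S$ be the set of all $x\in Q$ satisfying (b). For nonempty $K\subset Q$, a set $\mathscr{S}\subset U^n$ is $(n,K,Q)$-spanning if $K\subset\bigcup_{S\subset\mathscr{S},\,S\in AF^n(Q)}Q_S$. Let $r_{inv}(n,K,Q)=\inf\{\sharp\mathscr{S}:\mathscr{S}\text{ is }(n,K,Q)\text{-spanning}\}$ (with $\inf\emptyset=\infty$), and the invariance entropy $h_{inv}(K,Q)=\limsup_{n\to\infty}\frac1n\log r_{inv}(n,K,Q)$, where $\log$ is base $2$. *)

(* Defs.v *)
From HB Require Import structures.
From mathcomp Require Import all_boot all_order all_algebra.
From mathcomp Require Import all_classical all_reals.
From mathcomp Require Import ereal topology normedtype sequences exp.
Set Implicit Arguments. Unset Strict Implicit. Unset Printing Implicit Defensive.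
Import Order.TTheory GRing.Theory Num.Theory.
Local Open Scope classical_set_scope.
Local Open Scope ring_scope.

Section InvEntropy.
Variables (X U : Type) (F : X -> U -> set X).

Definition Fimg (A : set X) (u : U) : set X :=
  [set y | exists2 x, A x & F x u y].

Definition ctrl_inv (Q : set X) : Prop :=
  forall x, Q x -> exists u, F x u `<=` Q.

Definition Qu (Q : set X) (u : U) : set X :=
  [set x | Q x /\ F x u `<=` Q].

(* words of U^n are sequences of size n; letter i is [nth d w i] (any d). *)
Definition words (n : nat) : set (seq U) := [set w | size w = n].

(* I^i_w(x), for a word w of length n = size w:
   I^0 = {x}; I^{i+1} = F(I^i, w_i) /\ Q_{w_{i+1}} for i <= n-2;
   I^n = F(I^{n-1}, w_{n-1}). *)
Fixpoint Iset (Q : set X) (d : U) (w : seq U) (x : X) (i : nat) : set X :=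
  match i with
  | 0 => [set x]
  | j.+1 => if (j.+1 < size w)%N
            then Fimg (Iset Q d w x j) (nth d w j) `&` Qu Q (nth d w j.+1)
            else Fimg (Iset Q d w x j) (nth d w j)
  end.

Definition adm_point (n : nat) (Q : set X) (S : set (seq U)) (x : X) : Prop :=
  Q x /\
  forall w, S w -> forall d : U,
    (forall i, (i.+2 <= n)%N ->
       Fimg (Iset Q d w x i) (nth d w i) `<=`
         [set y | exists2 w', (S w' /\ take i.+1 w' = take i.+1 w)
                          & Qu Q (nth d w' i.+1) y]
       /\ Iset Q d w x i.+1 !=set0)
    /\ Iset Q d w x n `<=` Q.

Definition AF (n : nat) (Q : set X) (S : set (seq U)) : Prop :=
  [/\ S `<=` words n, S !=set0,
      (forall w1 w2, S w1 -> S w2 -> take 1 w1 = take 1 w2)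
    & exists x, adm_point n Q S x].

Definition QS (n : nat) (Q : set X) (S : set (seq U)) : set X :=
  [set x | adm_point n Q S x].

Definition spanning (n : nat) (K Q : set X) (Sc : set (seq U)) : Prop :=
  Sc `<=` words n /\
  K `<=` [set x | exists S, [/\ S `<=` Sc, AF n Q S & QS n Q S x]].

Variable R : realType.

(* r_inv(n,K,Q) in [0,+oo]; inf over finite spanning sets (infinite ones
   have cardinality +oo and do not change the infimum); inf of empty = +oo *)
Definition r_inv (n : nat) (K Q : set X) : \bar R :=
  ereal_inf [set ((k%:R : R)%:E) | k in
             [set k | exists Sc, spanning n K Q Sc /\ (Sc #= `I_k)%card]].

End InvEntropy.

Definition elog2 {R : realType} (x : \bar R) : \bar R :=
  match x with
  | (r%:E)%E => if r <= 0 then (-oo)%E else (ln r / ln 2)%:E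
  | (+oo)%E => (+oo)%E
  | (-oo)%E => (-oo)%E
  end.

Definition h_inv {X U : Type} (F : X -> U -> set X) (R : realType)
  (K Q : set X) : \bar R :=
  limn_esup (fun n : nat => ((n%:R : R)^-1)%:E * elog2 (r_inv F R n K Q))%E.

(* Main.v *)
Require Import Defs.
From HB Require Import structures.
From mathcomp Require Import all_boot all_order all_algebra.
From mathcomp Require Import all_classical all_reals.
From mathcomp Require Import ereal topology normedtype sequences exp.
From mathcomp Require Import lra.
Import Order.TTheory GRing.Theory Num.Theory.
Local Open Scope classical_set_scope.
Local Open Scope ring_scope.
 

Section Comb.
Variables (X U : Type) (F : X -> U -> set X).

Lemma Iset_take Q d w x n j : size w = n.+1 -> (j < n)%N ->
  Iset F Q d (take n w) x j = Iset F Q d w x j.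
Proof.
move=> sw; elim: j => [//|j IH] jn /=.
rewrite size_takel ?sw // jn (_ : (j.+1 < n.+1)%N = true) ?ltnS ?(ltnW jn) //.
by rewrite IH ?(ltnW jn) // !nth_take // ltnW.
Qed.

Lemma adm_take n Q S x : S `<=` words n.+1 -> adm_point F n.+1 Q S x ->
  adm_point F n Q (take n @` S) x.
Proof.
move=> Sw [Qx H]; split => // _ [w Sw' <-] d.
have sw : size w = n.+1 by apply: Sw.
have [H1 H2] := H w Sw' d.
split.
  move=> i i2n.
  have [Hs Hne] := H1 i (ltnW i2n).
  have iltn : (i < n)%N := ltnW i2n.
  rewrite !Iset_take // ?nth_take //.
  split => // y [z Iz Fz].
  have [w'' [Sw'' tk] Qy] := Hs y (ex_intro2 _ _ z Iz Fz).
  exists (take n w''); last by rewrite nth_take.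
  split; first by exists w''.
  by rewrite !take_takel // ltnW.
clear H Sw Sw' H2; case: n sw H1 => [|j] sw H1.
  by move=> y /= ->.
move=> y /=.
rewrite size_takel ?sw // ltnn Iset_take // nth_take //.
move=> Hy; have [Hs _] := H1 j (leqnn _).
have [w'' _ []] := Hs y Hy; done.
Qed.
End Comb.

Section Comb2.
Variables (X U : Type) (F : X -> U -> set X).

Lemma AF_take n Q S : AF F n.+1 Q S -> AF F n Q (take n @` S).
Proof.
case=> Sw [w0 Sw0] H1 [x ax]; split.
- move=> _ [w Sw' <-]; rewrite /words /= size_takel //.
  by rewrite (Sw w Sw').
- by exists (take n w0), w0.
- move=> _ _ [w1 S1 <-] [w2 S2 <-].
  case: n {Sw ax} => [|n]; first by rewrite !take0.
  by rewrite !take_takel //; apply: H1.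
- by exists x; apply: adm_take.
Qed.

Lemma span_take n K Q Sc : spanning F n.+1 K Q Sc -> spanning F n K Q (take n @` Sc).
Proof.
case=> Scw HK; split.
  move=> _ [w Sw' <-]; rewrite /words /= size_takel //.
  by rewrite (Scw w Sw').
move=> x /HK [S [SSc AS QSx]]; exists (take n @` S); split.
- by move=> _ [w Sw' <-]; exists w => //; apply: SSc.
- exact: AF_take.
- by apply: adm_take => //; case: AS.
Qed.

Variable R : realType.
Local Open Scope ereal_scope.

Lemma r_mono n K Q : r_inv F R n K Q <= r_inv F R n.+1 K Q.
Proof.
apply: le_ereal_inf_tmp => _ [k [Sc [sp cd]] <-].
have /finite_setP [k' ck'] : finite_set (take n @` Sc).
  by apply: finite_image; exists k.
apply: ge_ereal_inf; exists (k'%:R)%:E.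
  by exists k' => //; exists (take n @` Sc); split => //; apply: span_take.
rewrite lee_fin ler_nat -card_le_II.
rewrite -(card_le_eql ck') -(card_le_eqr cd).
exact: card_image_le.
Qed.

Lemma r_ge1 n K Q : K !=set0 -> 1 <= r_inv F R n K Q.
Proof.
move=> [x Kx]; apply: le_ereal_inf_tmp => _ [k [Sc [[_ sp] cd]] <-].
case: k cd => [|k] cd; last by rewrite lee_fin ler1n.
have [S [SSc [_ [w Sw] _ _] _]] := sp x Kx.
move: cd; rewrite II0 card_eq0 => /eqP Sc0.
by have := SSc w Sw; rewrite Sc0.
Qed.
End Comb2.

Section An.
Variable R : realType.
Local Open Scope ereal_scope.
Implicit Types (u : nat -> \bar R).

Lemma ev_le u N (M : \bar R) : (forall n, (N <= n)%N -> u n <= M) -> limn_esup u <= M.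
Proof.
move=> H; rewrite /limn_esup /limf_esup; apply: ge_ereal_inf.
exists (ereal_sup (u @` [set n | (N <= n)%N])).
  by exists [set n | (N <= n)%N] => //; exists N.
by apply: ge_ereal_sup => _ [n hn <-]; apply: H.
Qed.

Lemma lt_ev u (M : \bar R) : limn_esup u < M -> exists N, forall n, (N <= n)%N -> u n <= M.
Proof.
rewrite /limn_esup /limf_esup => /ereal_inf_lt [_ [V [N _ HV] <-]] lt.
exists N => n Nn; apply/ltW/(le_lt_trans _ lt).
by apply: ereal_sup_ubound; exists n => //; apply: HV.
Qed.

Lemma le_via (x y : \bar R) : (forall M : R, y < M%:E -> x <= M%:E) -> x <= y.
Proof.
case: y => [r| |] H.
- apply/lee_addgt0Pr => e e0; apply: H; rewrite lte_fin ltrDl //.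
- by rewrite leey.
- case: x H => [r| |] H //.
  + by have := H (r - 1)%R (ltNyr _); rewrite lee_fin lerBrDl addrC -lerBrDl subrr ler10.
  + by have := H 0%R (ltNyr _).
Qed.

Local Close Scope ereal_scope.
Lemma main_abs (b : nat -> \bar R) m : (0 < m)%N -> (forall k, 0 <= b k)%E ->
  (forall k l, (k <= l)%N -> b k <= b l)%E ->
  limn_esup (fun n : nat => ((n%:R : R)^-1)%:E * b n)%E =
  limn_esup (fun n : nat => ((((n * m)%N)%:R : R)^-1)%:E * b (n * m)%N)%E.
Proof.
Local Open Scope ereal_scope.
move=> m0 b0 bmono; apply/eqP; rewrite eq_le; apply/andP; split; last first.
  apply: le_via => M /lt_ev [N HN]; apply: (ev_le _ N) => n Nn.
  by apply: HN; apply: (leq_trans Nn); rewrite leq_pmulr.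
apply: le_via => M /lt_ev [N HN].
have M0 : (0 <= M)%R.
  by rewrite -lee_fin; apply: le_trans (HN N (leqnn _)); rewrite mule_ge0 // lee_fin invr_ge0.
apply/lee_addgt0Pr => e e0.
pose N1 := maxn (maxn N 1) (Num.trunc (M / e)).+1.
apply: (ev_le _ (N1 * m)) => k hk.
pose n := (k %/ m)%N.
have nN1 : (N1 <= n)%N by rewrite /n -(mulnK N1 m0) leq_div2r.
have n1 : (1 <= n)%N by apply: leq_trans nN1; rewrite /N1 leq_max leq_max leqnn orbT.
have nN : (N <= n)%N by apply: leq_trans nN1; rewrite /N1 leq_max leq_max leqnn.
have nt : ((Num.trunc (M / e)).+1 <= n)%N by apply: leq_trans nN1; rewrite /N1 leq_max leqnn orbT.
have nmk : (n * m <= k)%N by apply: leq_trunc_div.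
have kn1 : (k < n.+1 * m)%N by apply: ltn_ceil.
have := HN n.+1 (leq_trans nN (leqnSn _)).
have := b0 (n.+1 * m)%N; have := bmono _ _ (ltnW kn1); have := b0 k.
case: (b (n.+1 * m)%N) => [be| |]; last by [].
  case: (b k) => [ga| |] //.
  rewrite -!EFinM -EFinD !lee_fin => ga0 gabe be0 hbe.
  have kpos : (0 < k%:R :> R)%R.
    by rewrite ltr0n; apply: leq_trans nmk; rewrite muln_gt0 n1.
  have cpos : (0 < (n.+1 * m)%:R :> R)%R by rewrite ltr0n muln_gt0.
  have hbe' : (be <= (n.+1 * m)%:R * M)%R.
    by move: hbe; rewrite -(ler_pM2l cpos) mulrA mulfV ?mul1r // gt_eqF.
  have nmk' : (n%:R * m%:R <= k%:R :> R)%R by rewrite -natrM ler_nat.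
  have Mne : (M <= n%:R * e)%R.
    rewrite -ler_pdivrMr //; apply/ltW/(lt_le_trans (truncnS_gt _)).
    by rewrite ler_nat.
  have n1' : (1 <= n%:R :> R)%R by rewrite ler1n.
  have m1' : (1 <= m%:R :> R)%R by rewrite ler1n.
  rewrite -(ler_pM2l kpos) mulrA mulfV ?mul1r ?gt_eqF //.
  move: hbe'; rewrite natrM mulrSr => hbe'.
  have h1 : (0 <= (M + e) * (k%:R - n%:R * m%:R))%R.
    by apply: mulr_ge0; [lra| lra].
  have h2 : (0 <= m%:R * (n%:R * e - M))%R.
    by apply: mulr_ge0; lra.
  nra.
case: (b k) => [ga| |] //; rewrite gt0_muley ?lte_fin ?invr_gt0 ?ltr0n ?muln_gt0 //.
Qed.
End An.

Section Fin.
Variable R : realType.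
Local Open Scope ereal_scope.

Lemma ln2_gt0 : (0 < ln (2 : R))%R.
Proof. by apply: ln_gt0; rewrite ltr1n. Qed.

Lemma elog2_ge0 (x : \bar R) : 1 <= x -> 0 <= elog2 x.
Proof.
case: x => [r| |] //=; rewrite lee_fin => h.
rewrite ifF; last by apply/negbTE; rewrite -ltNge (lt_le_trans ltr01).
by rewrite lee_fin divr_ge0 // ?ln_ge0 // ler1n.
Qed.

Lemma elog2_le (x y : \bar R) : 1 <= x -> x <= y -> elog2 x <= elog2 y.
Proof.
case: x => [r| |] //; case: y => [s| |] //=; rewrite ?lee_fin => h1 h2 //.
  have r0 : (0 < r)%R by rewrite (lt_le_trans ltr01).
  have s0 : (0 < s)%R by rewrite (lt_le_trans r0).
  rewrite !ifF; last 2 first.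
  - by apply/negbTE; rewrite -ltNge.
  - by apply/negbTE; rewrite -ltNge.
  by rewrite lee_fin ler_pM2r ?invr_gt0 ?ln2_gt0 // ler_ln // posrE.
by rewrite ifF ?leey //; apply/negbTE; rewrite -ltNge (lt_le_trans ltr01).
Qed.
End Fin.

Lemma r_mono_le (R : realType) X U (F : X -> U -> set X) K Q k l : (k <= l)%N ->
  (r_inv F R k K Q <= r_inv F R l K Q)%E.
Proof.
move=> /subnK <-; elim: (l - k)%N => [|d IH] //.
by apply: le_trans IH _; rewrite addSn; apply: r_mono.
Qed.

Theorem proposition2p6 (R : realType) (X U : Type) (F : X -> U -> set X)
  (hX : inhabited X) (hU : inhabited U)
  (hF : forall x u, F x u !=set0)
  (Q K : set X) (hQ : ctrl_inv F Q) (hKQ : K `<=` Q) (hK : K !=set0)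
  (m : nat) (hm : (0 < m)%N) :
  h_inv F R K Q =
  limn_esup (fun n : nat =>
    (((n * m)%:R : R)^-1)%:E * elog2 (r_inv F R (n * m) K Q))%E.
Proof.
have b0 : forall k, (0 <= elog2 (r_inv F R k K Q))%E.
  by move=> k; apply: elog2_ge0; apply: r_ge1.
have mono : forall k l, (k <= l)%N ->
    (elog2 (r_inv F R k K Q) <= elog2 (r_inv F R l K Q))%E.
  by move=> k l kl; apply: elog2_le; [apply: r_ge1|apply: r_mono_le].
exact: (main_abs _ (fun k => elog2 (r_inv F R k K Q)) m hm b0 mono).
Qed.
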